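(* There is a function $C(t,\epsilon)$ such that the following holds for every positive integer $t$ and every $\epsilon\in(0,1)$: let $G$ be a connected balanced bipartite graph with parts $X,Y$ each of order $n$, with $\delta(G)\geq 3C(t,\epsilon)$ and with no induced $S_{t,t}$. Then: (i) writing $U_X(\epsilon)=\{u_1,\dots,u_m\}$, there exist $2m$ distinct vertices $v_1^-,v_1^+,\dots,v_m^-,v_m^+\in Y\setminus U_Y(\epsilon)$ such that $u_iv_i^-$ and $u_iv_i^+$ are edges for all $i$; (ii) writing $U_Y(\epsilon)=\{v_1,\dots,v_m\}$, there exist $2m$ distinct vertices $u_1^-,u_1^+,\dots,u_m^-,u_m^+\in X\setminus U_X(\epsilon)$ such that $v_iu_i^-$ and $v_iu_i^+$ are edges for all $i$.
   Context: For positive integers $a,b$, the biclaw $S_{a,b}$ is the graph with vertex set $\{x,x_1,\dots,x_a,y,y_1,\dots,y_b\}$ and edges $xy$, $xy_1,\dots,xy_b$, $yx_1,\dots,yx_a$; ''no induced $S_{t,t}$'' means no induced subgraph isomorphic to $S_{t,t}$. For a bipartite graph with parts $X,Y$, $\Delta_X=\max_{x\in X} d(x)$, $\Delta_Y=\max_{y\in Y}d(y)$, $U_X(\epsilon)=\{x\in X: d(x)\leq (1-\epsilon)\Delta_X\}$ and $U_Y(\epsilon)=\{y\in Y: d(y)\leq(1-\epsilon)\Delta_Y\}$. $\delta(G)$ is the minimum degree. *)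

(* Defs.v *)
From HB Require Import structures.
From mathcomp Require Import all_boot all_order all_algebra.
From mathcomp Require Import reals.
Set Implicit Arguments. Unset Strict Implicit. Unset Printing Implicit Defensive.
Import Order.TTheory GRing.Theory Num.Theory.

Definition deg (T : finType) (e : rel T) (v : T) : nat := #|[set w | e v w]|.

Definition maxdeg (T : finType) (e : rel T) (A : {set T}) : nat :=
  \max_(v in A) deg e v.

Definition Uset (R : realType) (T : finType) (e : rel T) (A : {set T}) (eps : R)
  : {set T} :=
  [set v in A | ((deg e v)%:R <= (1 - eps) * (maxdeg e A)%:R)%R].

(* Vertex type of the biclaw S_{a,b}:
   inl true = x, inl false = y, inr (inl i) = x_i, inr (inr j) = y_j. *)
Definition biclaw_vert (a b : nat) : finType := (bool + ('I_a + 'I_b))%type.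

Definition biclaw_edge (a b : nat) (u v : biclaw_vert a b) : bool :=
  match u, v with
  | inl true, inl false | inl false, inl true => true
  | inl true, inr (inr _) | inr (inr _), inl true => true
  | inl false, inr (inl _) | inr (inl _), inl false => true
  | _, _ => false
  end.

Definition has_induced_biclaw (T : finType) (e : rel T) (a b : nat) : Prop :=
  exists f : biclaw_vert a b -> T,
    injective f /\ forall u v, e (f u) (f v) = biclaw_edge u v.

(* Main.v *)
Require Import Defs.
From HB Require Import structures.
From mathcomp Require Import all_boot all_order all_algebra.
From mathcomp Require Import reals.
From mathcomp Require Import zify ring lra.
Import Order.TTheory GRing.Theory Num.Theory.
Set Implicit Arguments. Unset Strict Implicit. Unset Printing Implicit Defensive.

Section Hall.
Variables (A B : finType) (b0 : B).

Definition NS (r : A -> B -> bool) (S : {set A}) : {set B} := [set b | [exists a in S, r a b]].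

Definition hcond r (L : {set A}) := forall S : {set A}, S \subset L -> #|S| <= #|NS r S|.

Lemma hall n : forall (r : A -> B -> bool) (L : {set A}), #|L| <= n -> hcond r L ->
  exists f : A -> B, (forall a, a \in L -> r a (f a)) /\ {in L &, injective f}.
Proof.
elim: n => [|n IH] r L cL hc.
  move: cL; rewrite leqn0 cards_eq0 => /eqP ->.
  by exists (fun _ => b0); split => [a|a a']; rewrite inE.
case: (boolP [exists S : {set A}, [&& S \proper L, S != set0 & #|NS r S| <= #|S|]]).
- move=> /existsP [S /and3P [SL S0 tight]].
  have sSL : S \subset L by apply: proper_sub.
  have cS : #|S| <= n.
    by move: (proper_card SL) cL; lia.
  have hcS : hcond r S by move=> S' S'S; apply: hc; apply: subset_trans S'S sSL.
  have [f1 [f1r f1i]] := IH r S cS hcS.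
  pose r2 a b := r a b && (b \notin NS r S).
  have cL2 : #|L :\: S| <= n.
    have := cardsID S L; rewrite (setIidPr sSL).
    have : 0 < #|S| by rewrite card_gt0.
    by move: cL; lia.
  have hc2 : hcond r2 (L :\: S).
    move=> S' S'L.
    have dis : [disjoint S' & S].
      rewrite -setI_eq0; apply/eqP/setP => a; rewrite !inE.
      apply/negP => /andP [aS' aS]; move: (subsetP S'L a aS'); rewrite inE aS //.
    have sub1 : S' :|: S \subset L.
      by rewrite subUset sSL andbT; apply: subset_trans S'L (subsetDl _ _).
    have h1 := hc (S' :|: S) sub1.
    rewrite cardsU (disjoint_setI0 dis) cards0 subn0 in h1.
    have eqN : NS r (S' :|: S) = NS r2 S' :|: NS r S.
      apply/setP => b; rewrite !inE.
      apply/idP/idP.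
        move=> /existsP [a /andP [aU rab]].
        case bS: [exists a0 in S, r a0 b]; first by rewrite orbT.
        move: aU; rewrite inE => /orP [aS'|aS].
          by apply/orP; left; apply/existsP; exists a; rewrite aS' /r2 rab /= inE bS.
        by move: bS => /negbT/existsPn/(_ a); rewrite aS rab.
      move=> /orP [/existsP [a /andP [aS' /andP [rab _]]] | /existsP [a /andP [aS rab]]].
        by apply/existsP; exists a; rewrite inE aS' rab.
      by apply/existsP; exists a; rewrite inE aS orbT rab.
    rewrite eqN in h1.
    have h2 : #|NS r2 S' :|: NS r S| <= #|NS r2 S'| + #|NS r S| := leq_card_setU _ _.
    by move: h1 h2 tight; lia.
  have [f2 [f2r f2i]] := IH r2 (L :\: S) cL2 hc2.
  exists (fun a => if a \in S then f1 a else f2 a); split.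
    move=> a aL; case aS: (a \in S); first exact: f1r.
    by have := f2r a; rewrite inE aS aL => /(_ isT) /andP [].
  move=> a a' aL a'L /=.
  have NSf1 : forall x, x \in S -> f1 x \in NS r S.
    by move=> x xS; rewrite inE; apply/existsP; exists x; rewrite xS f1r.
  have nNSf2 : forall x, x \in L -> x \notin S -> f2 x \notin NS r S.
    by move=> x xL xS; have := f2r x; rewrite inE xS xL => /(_ isT) /andP [].
  case aS: (a \in S); case a'S: (a' \in S).
  + exact: f1i.
  + by move=> h; move: (nNSf2 a' a'L (negbT a'S)); rewrite -h NSf1.
  + by move=> h; move: (nNSf2 a aL (negbT aS)); rewrite h NSf1.
  + by apply: f2i; rewrite inE ?aS ?a'S ?aL ?a'L.
- move=> /existsPn hstrict.
  case: (set_0Vmem L) => [L0|[a0 a0L]].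
    by exists (fun _ => b0); rewrite L0; split => [a|a a']; rewrite inE.
  have sub0 : [set a0] \subset L by rewrite sub1set.
  have h1 := hc [set a0] sub0.
  rewrite cards1 card_gt0 in h1; have [b1] := set0Pn _ h1.
  rewrite inE => /existsP [a /andP [aa0 rab1]]; move: aa0; rewrite inE => /eqP aa0; subst a.
  pose r2 a b := r a b && (b != b1).
  have cL2 : #|L :\ a0| <= n by move: cL (cardsD1 a0 L); rewrite a0L; lia.
  have hc2 : hcond r2 (L :\ a0).
    move=> S' S'L; case: (set_0Vmem S') => [->|[x xS']]; first by rewrite cards0.
    have S'prop : S' \proper L.
      rewrite properEneq (subset_trans S'L (subsetDl _ _)) andbT.
      apply/eqP => eS; move: (subsetP S'L a0); rewrite eS a0L !inE eqxx => /(_ isT).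
      done.
    have S'0 : S' != set0 by apply/set0Pn; exists x.
    have hlt : #|S'| < #|NS r S'| by move: (hstrict S'); rewrite S'prop S'0 /= ltnNge.
    have : NS r S' \subset NS r2 S' :|: [set b1].
      apply/subsetP => b; rewrite !inE => /existsP [a /andP [aS rab]].
      case bb: (b == b1); first by rewrite orbT.
      by apply/orP; left; apply/existsP; exists a; rewrite aS /r2 rab bb.
    move/subset_leq_card => h; have := leq_trans h (leq_card_setU _ _).
    by rewrite cards1; move: hlt; lia.
  have [f2 [f2r f2i]] := IH r2 (L :\ a0) cL2 hc2.
  exists (fun a => if a == a0 then b1 else f2 a); split.
    move=> a aL; case: eqP => [->//|/eqP na].
    by have := f2r a; rewrite !inE na aL => /(_ isT) /andP [].
  have nb1 : forall x, x \in L -> x != a0 -> f2 x != b1.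
    by move=> x xL xa; have := f2r x; rewrite !inE xa xL => /(_ isT) /andP [].
  move=> a a' aL a'L /=.
  case: (eqVneq a a0) => [->|na]; case: (eqVneq a' a0) => [->|na'] //.
  + by move=> h; move: (nb1 a' a'L na'); rewrite -h eqxx.
  + by move=> h; move: (nb1 a aL na); rewrite h eqxx.
  + by apply: f2i; rewrite in_setD1 ?na ?na' ?aL ?a'L.
Qed.

End Hall.

Ltac gclear := repeat match goal with H : _ |- _ => clear H end.
Ltac plia := gclear; lia.
Ltac pnia := gclear; nia.

Section Graph.
Variable T : finType.
Variable e : rel T.
Variable X : {set T}.
Hypothesis esym : symmetric e.
Hypothesis ebip : forall u v, e u v -> (u \in X) != (v \in X).

Definition nb (v : T) : {set T} := [set w | e v w].

Lemma nbE v w : (w \in nb v) = e v w.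
Proof. by rewrite inE. Qed.

Lemma degE v : deg e v = #|nb v|.
Proof. by []. Qed.

Lemma eside a b c : e a c -> e b c -> ~~ e a b.
Proof.
move=> hac hbc; apply/negP => hab.
have h1 := ebip hac; have h2 := ebip hbc; have h3 := ebip hab.
by move: h1 h2 h3; case: (a \in X); case: (b \in X); case: (c \in X).
Qed.

Lemma esym' a b : e a b -> e b a.
Proof. by rewrite esym. Qed.

Lemma eirr a : ~~ e a a.
Proof. by apply/negP => /ebip; rewrite eqxx. Qed.

Lemma exch_count (r : T -> T -> bool) (A B : {set T}) :
  \sum_(a in A) #|[set b in B | r a b]| = \sum_(b in B) #|[set a in A | r a b]|.
Proof.
have h : forall (a : T) (C : {set T}) (p : pred T), #|[set c in C | p c]| = \sum_(c in C) (p c : nat).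
  move=> a C p; rewrite -sum1_card big_mkcond /= [RHS]big_mkcond /=.
  by apply: eq_bigr => c _; rewrite !inE; case: (p c); case: (c \in C).
under eq_bigr => a _ do rewrite (h a B (r a)).
under [RHS]eq_bigr => b _ do rewrite (h b A (r^~ b)).
by rewrite exchange_big.
Qed.

Lemma dcount (A B : {set T}) :
  \sum_(a in A) #|nb a :&: B| = \sum_(b in B) #|nb b :&: A|.
Proof.
have h : forall (a : T) (C : {set T}), #|nb a :&: C| = \sum_(c in C) (e a c : nat).
  move=> a C; rewrite -sum1_card big_mkcond /= [RHS]big_mkcond /=.
  by apply: eq_bigr => c _; rewrite !inE; case: (e a c); case: (c \in C).
under eq_bigr do rewrite h.
under [RHS]eq_bigr do rewrite h.
rewrite exchange_big /=; apply: eq_bigr => b _; apply: eq_bigr => a _.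
by rewrite esym.
Qed.

Lemma sum_le_card_max (A : {set T}) (g : T -> nat) :
  0 < #|A| -> exists2 w, w \in A & \sum_(a in A) g a <= #|A| * g w.
Proof.
move=> hA; have [w wA wmax] := eq_bigmax_cond g hA.
exists w => //; rewrite -wmax -sum1_card big_distrl /= mul1n.
by apply: leq_sum => i iA; apply: leq_bigmax_cond.
Qed.


Lemma kst_iter (t q : nat) (x y : T) (S : {set T}) :
  0 < q -> 2*t*q < deg e x -> S \subset nb y ->
  (forall a, a \in S -> deg e x <= q * #|nb x :\: nb a|) ->
  forall k, k <= t -> exists W : seq T, exists Sk : {set T},
   [/\ size W = k /\ uniq W, {subset W <= nb x :\ y}, Sk \subset S,
       (forall a w, a \in Sk -> w \in W -> ~~ e a w) & #|S| <= #|Sk| * (2*q)^k].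
Proof.
move=> q0 hdeg hS hmiss; elim=> [|k IH] hk.
  exists [::], S; split => //; by rewrite muln1.
have [W [Sk [[sW uW] subW SkS nadj cS]]] := IH (ltnW hk).
set B' := (nb x :\ y) :\: [set w in W].
have cB'1 : deg e x <= #|B'| + (k.+1).
  rewrite degE.
  have : nb x \subset B' :|: ([set y] :|: [set w in W]).
    apply/subsetP => w; rewrite /nb !inE => wx.
    by rewrite wx; case: (w == y); case: (w \in W).
  move/subset_leq_card => h; apply: (leq_trans h).
  apply: (leq_trans (leq_card_setU _ _)); rewrite leq_add2l.
  apply: (leq_trans (leq_card_setU _ _)); rewrite cards1 add1n ltnS.
  have -> : #|[set w in W]| = size W by rewrite cardsE; apply/card_uniqP.
  by rewrite sW.
have cB'2 : #|B'| <= deg e x.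
  by rewrite degE; apply: subset_leq_card; apply/subsetP => w; rewrite !inE => /andP [_ /andP [_ ->]].
have B'pos : 0 < #|B'| by move: hk cB'1 hdeg q0; nia.
have hterm : forall a, a \in Sk -> deg e x <= 2 * q * #|[set w in B' | ~~ e a w]|.
  move=> a aSk; have aS := subsetP SkS a aSk.
  have ay : e y a by move: (subsetP hS a aS); rewrite nbE.
  have h1 := hmiss a aS.
  have h2 : #|nb x :\: nb a| <= #|[set w in B' | ~~ e a w]| + k.
    have : nb x :\: nb a \subset [set w in B' | ~~ e a w] :|: [set w in W].
      apply/subsetP => w; rewrite !inE => /andP [naw xw].
      case wW: (w \in W); rewrite ?orbT // orbF naw xw !andbT /=.
      by apply/eqP => wy; move: naw; rewrite wy esym ay.
    move/subset_leq_card => h; apply: (leq_trans h); apply: (leq_trans (leq_card_setU _ _)).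
    rewrite leq_add2l.
    have -> : #|[set w in W]| = size W by rewrite cardsE; apply/card_uniqP.
    by rewrite sW.
  move: h1 h2 hk hdeg; nia.
have hsum : #|Sk| * deg e x <= 2 * q * \sum_(w in B') #|[set a in Sk | ~~ e a w]|.
  rewrite -(exch_count (fun a w => ~~ e a w)) big_distrr /=.
  rewrite -[#|Sk|]sum1_card big_distrl /=; apply: leq_sum => a aSk; rewrite mul1n.
  exact: hterm.
have [w wB' wmax] := sum_le_card_max (fun w => #|[set a in Sk | ~~ e a w]|) B'pos.
set cnt := #|[set a in Sk | ~~ e a w]| in wmax.
have hcnt : #|Sk| <= 2 * q * cnt.
  have : #|Sk| * deg e x <= 2 * q * (deg e x * cnt).
    apply: (leq_trans hsum); rewrite leq_mul2l; apply/orP; right; apply: (leq_trans wmax).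
    by rewrite leq_mul2r cB'2 orbT.
  move: hdeg; nia.
exists (w :: W), [set a in Sk | ~~ e a w]; split.
- split; first by rewrite /= sW.
  by rewrite /= uW andbT; move: wB'; rewrite !inE => /andP [/negP h _]; apply/negP.
- by move=> z; rewrite inE => /orP [/eqP -> | /subW //]; move: wB'; rewrite !inE => /andP [_ ->].
- by apply/subsetP => a; rewrite inE => /andP [/(subsetP SkS) ->].
- move=> a z; rewrite !inE => /andP [aSk naw] /orP [/eqP -> // | zW]; exact: nadj.
- rewrite expnS; apply: (leq_trans cS); rewrite mulnA (mulnC _ (2*q)).
  by rewrite leq_mul2r hcnt orbT.
Qed.


Lemma noedge a b c : e a c -> e b c -> e a b = false.
Proof. by move=> h1 h2; apply/negbTE; apply: eside h1 h2. Qed.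

Lemma mk_biclaw t x y (W : seq T) (S : {set T}) :
  e x y -> size W = t -> uniq W -> t <= #|S| -> S \subset nb y :\ x ->
  {subset W <= nb x :\ y} -> (forall a w, a \in S -> w \in W -> ~~ e a w) ->
  has_induced_biclaw e t t.
Proof.
move=> exy sW uW tS SS WS nadj.
pose sI (i : 'I_t) := nth x (enum S) i.
pose wJ (j : 'I_t) := nth x W j.
have sizeS : size (enum S) = #|S| by rewrite cardE.
have sIS i : sI i \in S.
  by rewrite -mem_enum; apply: mem_nth; rewrite sizeS; apply: leq_trans tS.
have wJW j : wJ j \in W by apply: mem_nth; rewrite sW.
have eys i : e y (sI i) by move: (subsetP SS _ (sIS i)); rewrite !inE => /andP [_ ->].
have esx i : sI i != x by move: (subsetP SS _ (sIS i)); rewrite !inE => /andP [-> _].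
have exw j : e x (wJ j) by move: (WS _ (wJW j)); rewrite !inE => /andP [_ ->].
have ewy j : wJ j != y by move: (WS _ (wJW j)); rewrite !inE => /andP [-> _].
have eyx : e y x by rewrite esym.
have esy i : e (sI i) y by rewrite esym.
have ewx j : e (wJ j) x by rewrite esym.
have nsw i j : e (sI i) (wJ j) = false by apply/negbTE; apply: nadj.
have nws i j : e (wJ j) (sI i) = false by rewrite esym nsw.
have nxs i : e x (sI i) = false by apply: (noedge exy (esy i)).
have nsx i : e (sI i) x = false by rewrite esym nxs.
have nss i i' : e (sI i) (sI i') = false by apply: (noedge (esy i) (esy i')).
have nyw j : e y (wJ j) = false by apply: (noedge eyx (ewx j)).
have nwy j : e (wJ j) y = false by rewrite esym nyw.
have nww j j' : e (wJ j) (wJ j') = false by apply: (noedge (ewx j) (ewx j')).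
have nxx : e x x = false by apply/negbTE; apply: eirr.
have nyy : e y y = false by apply/negbTE; apply: eirr.
pose f (v : biclaw_vert t t) : T :=
  match v with
  | inl true => x | inl false => y | inr (inl i) => sI i | inr (inr j) => wJ j end.
exists f; split.
  have sIinj i i' : sI i = sI i' -> i = i'.
    move/eqP; rewrite nth_uniq ?sizeS ?enum_uniq //; first by move/eqP/val_inj.
      by apply: leq_trans tS.
    by apply: leq_trans tS.
  have wJinj j j' : wJ j = wJ j' -> j = j'.
    by move/eqP; rewrite nth_uniq ?sW // => /eqP/val_inj.
  have xy : x != y by apply/eqP => h; move: exy; rewrite h nyy.
  have xw j : x != wJ j by apply/eqP => h; move: (exw j); rewrite -h nxx.
  have ys i : y != sI i by apply/eqP => h; move: (eys i); rewrite -h nyy.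
  have sw i j : sI i != wJ j by apply/eqP => h; move: (esy i); rewrite h nwy.
  move=> u v; case: u => [[]|[i|j]]; case: v => [[]|[i'|j']] //= h;
   try (by move: xy; rewrite h eqxx); try (by move: xy; rewrite h eqxx);
   try (by move: (esx i); rewrite h eqxx); try (by move: (esx i'); rewrite -h eqxx);
   try (by move: (xw j); rewrite h eqxx); try (by move: (xw j'); rewrite -h eqxx);
   try (by move: (ys i); rewrite h eqxx); try (by move: (ys i'); rewrite -h eqxx);
   try (by move: (ewy j); rewrite h eqxx); try (by move: (ewy j'); rewrite -h eqxx);
   try (by move: (sw i j'); rewrite h eqxx); try (by move: (sw i' j); rewrite h eqxx);
   try (by rewrite (sIinj _ _ h)); try (by rewrite (wJinj _ _ h)).
move=> u v; case: u => [[]|[i|j]]; case: v => [[]|[i'|j']] //=.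
all: by [apply: exw | apply: eys | apply: esy | apply: ewx].
Qed.


Lemma kst_bound t q x y (S : {set T}) :
  0 < q -> ~ has_induced_biclaw e t t -> e x y -> S \subset nb y :\ x ->
  2*t*q < deg e x ->
  (forall a, a \in S -> deg e x <= q * #|nb x :\: nb a|) ->
  #|S| < t * (2*q) ^ t.
Proof.
move=> q0 nob exy SS hdeg hmiss; rewrite ltnNge; apply/negP => hS.
have SS' : S \subset nb y.
  by apply: (subset_trans SS); apply/subsetP => z; rewrite !inE => /andP [_ ->].
have [W [St [[sW uW] subW StS nadj cS]]] := kst_iter q0 hdeg SS' hmiss (leqnn t).
have pos : 0 < (2*q) ^ t by rewrite expn_gt0 muln_gt0 q0.
have tSt : t <= #|St|.
  have := leq_trans hS cS; rewrite leq_mul2r => /orP [|//].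
  by rewrite eqn0Ngt pos.
apply: nob; apply: (mk_biclaw exy sW uW tSt) => //.
  exact: subset_trans StS SS.

Qed.


Lemma deg_le_max (A : {set T}) v : v \in A -> deg e v <= maxdeg e A.
Proof. by move=> vA; rewrite /maxdeg; apply: leq_bigmax_cond. Qed.

Lemma card_mul_le (A : {set T}) (f : T -> nat) c :
  (forall a, a \in A -> c <= f a) -> #|A| * c <= \sum_(a in A) f a.
Proof.
move=> h; rewrite -sum1_card big_distrl /=; apply: leq_sum => a aA; rewrite mul1n; exact: h.
Qed.

Lemma sum_le_card_mul (A : {set T}) (f : T -> nat) c :
  (forall a, a \in A -> f a <= c) -> \sum_(a in A) f a <= #|A| * c.
Proof.
move=> h; rewrite -sum1_card big_distrl /=; apply: leq_sum => a aA; rewrite mul1n; exact: h.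
Qed.

Section Struct.
Variables (t q D : nat).
Hypothesis t0 : 0 < t.
Hypothesis q8 : 8 <= q.
Hypothesis nob : ~ has_induced_biclaw e t t.
Hypothesis conn : forall u v, connect e u v.
Hypothesis mindeg : forall v, D <= deg e v.
Let K := t * (2*q) ^ t.
Hypothesis hD : 4*q*K + 4*t*q + 8 <= D.
Variable xs : T.
Hypothesis xsX : xs \in X.
Hypothesis xsdeg : deg e xs = maxdeg e X.
Let Dl := maxdeg e X.
Let Bs := nb xs.
Let P := [set x in X | (q-1)*Dl <= q * #|nb x :&: Bs|].
Let Z r := [set x in X | Dl <= r * #|nb x :&: Bs|].
Let R0 := [set y | (y \notin X) && (nb y :&: P == set0)].

Lemma K0 : 0 < K.
Proof. by rewrite /K muln_gt0 t0 expn_gt0 muln_gt0 /=; move: q8; plia. Qed.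

Lemma KD : 32 * K <= D.
Proof.
apply: leq_trans hD; apply: leq_trans (leq_addr _ _); apply: leq_trans (leq_addr _ _).
by rewrite leq_mul2r; apply/orP; right; move: q8; plia.
Qed.

Lemma qKD : 4 * (q * K) <= D.
Proof. by apply: leq_trans hD; rewrite mulnA -addnA leq_addr. Qed.

Lemma cBs : #|Bs| = Dl.
Proof. by rewrite /Bs -degE xsdeg. Qed.

Lemma DlD : D <= Dl.
Proof. by rewrite /Dl -xsdeg. Qed.

Lemma degX v : v \in X -> deg e v <= Dl.
Proof. exact: deg_le_max. Qed.

Lemma kdeg v : 2*t*q < deg e v.
Proof. by apply: leq_trans (mindeg v); move: hD; plia. Qed.

Lemma oside a b : e a b -> (a \in X) -> (b \notin X).
Proof. by move=> /ebip; case: (a \in X); case: (b \in X). Qed.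

Lemma oside' a b : e a b -> (a \notin X) -> (b \in X).
Proof. by move=> /ebip; case: (a \in X); case: (b \in X). Qed.

Lemma xsP : xs \in P.
Proof.
rewrite inE xsX /= setIid cBs; move: q8; pnia.
Qed.

Lemma fact1 y : y \in Bs -> #|nb y :\: P| < K.
Proof.
move=> yB.
have exy : e xs y by rewrite -nbE.
apply: (kst_bound (q:=q) _ nob exy); first by move: q8; plia.
- apply/subsetP => a; rewrite in_setD nbE => /andP [aP ya]; rewrite in_setD1 nbE ya andbT.
  by apply/eqP => ax; move: aP; rewrite ax xsP.
- by apply: kdeg.
move=> a; rewrite in_setD nbE => /andP [aP ya].
have aX : a \in X by apply: (oside' ya); apply: (oside exy).
move: aP; rewrite inE aX /= -ltnNge => aP.
have h := cardsID (nb a) Bs.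
rewrite [_ :&: nb a]setIC in h.
rewrite -/Bs xsdeg -/Dl.
move: h aP q8; rewrite cBs; pnia.
Qed.

Lemma fact2 r : 0 < r -> #|Z r :\: P| <= r * (K - 1).
Proof.
move=> r0.
have h := dcount (Z r :\: P) Bs.
have h1 : #|Z r :\: P| * Dl <= r * \sum_(a in Z r :\: P) #|nb a :&: Bs|.
  rewrite [r * _]big_distrr /=.
  by apply: card_mul_le => a; rewrite !inE => /andP [_ /andP [_ ->]].
have h2 : \sum_(b in Bs) #|nb b :&: (Z r :\: P)| <= Dl * (K - 1).
  rewrite -cBs; apply: sum_le_card_mul => b bB.
  have := fact1 bB; have : #|nb b :&: (Z r :\: P)| <= #|nb b :\: P|.
    by apply: subset_leq_card; apply/subsetP => z; rewrite !inE => /andP [-> /andP [-> _]].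
  move: K0; plia.
rewrite h in h1.
have Dl0 : 0 < Dl by apply: leq_trans DlD; move: hD; plia.
have := leq_trans h1 (leq_mul (leqnn r) h2).
rewrite mulnA [r * Dl]mulnC -mulnA mulnC leq_pmul2l //.
Qed.


Let badset z y := [set c in nb y :\ z | deg e z <= q * #|nb z :\: nb c|].

Lemma bad_small z y : e z y -> #|badset z y| < K.
Proof.
move=> ezy; apply: (kst_bound (q:=q) _ nob ezy); first by move: q8; plia.
- by apply/subsetP => c; rewrite inE => /andP [-> _].
- by apply: kdeg.
by move=> c; rewrite inE => /andP [_ ->].
Qed.

Lemma good_prop z c : #|nb z :&: Bs| <= #|nb c :&: Bs| + #|nb z :\: nb c|.
Proof.
apply: leq_trans (leq_card_setU _ _); apply: subset_leq_card.
apply/subsetP => w; rewrite !inE => /andP [zw wB]; rewrite zw wB /=.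
by case: (e c w).
Qed.

Lemma PZ2 p : p \in P -> p \in Z 2.
Proof. by rewrite !inE => /andP [-> h] /=; move: h q8; pnia. Qed.

Lemma i_noZ y z : y \in R0 -> e y z -> z \in Z 2 -> False.
Proof.
rewrite inE => /andP [yX /eqP yP] eyz zZ.
have zX : z \in X by apply: (oside' eyz yX).
have hsub : nb y :\ z \subset badset z y :|: (Z 4 :\: P).
  apply/subsetP => c cy.
  case cb: (c \in badset z y); first by rewrite inE cb.
  have eyc : e y c by move: cy; rewrite in_setD1 nbE => /andP [_ ->].
  have cX : c \in X by apply: (oside' eyc yX).
  have cP : c \notin P.
    apply/negP => cP; have : c \in nb y :&: P by rewrite in_setI nbE eyc cP.
    by rewrite yP inE.
  rewrite in_setU in_setD cP !inE cX /= orbC /=.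
  have good : q * #|nb z :\: nb c| < deg e z.
    by move: cb; rewrite inE cy /= ltnNge => ->.
  have := good_prop z c; have := degX zX; move: zZ; rewrite inE zX /=.
  move: good q8; pnia.
have := leq_trans (subset_leq_card hsub) (leq_card_setU _ _).
have := bad_small (esym' eyz); have := fact2 (isT : 0 < 4).
have := cardsD1 z (nb y); rewrite nbE eyz add1n -degE => hdy.
have := mindeg y; rewrite hdy; move: hD K0 q8; pnia.
Qed.


Lemma ii_small y p : y \notin X -> e y p -> p \in P -> #|nb y :\: Z 2| < K.
Proof.
move=> yX eyp pP.
have pX : p \in X by apply: (oside' eyp yX).
apply: leq_ltn_trans (bad_small (esym' eyp)).
apply: subset_leq_card; apply/subsetP => c; rewrite in_setD nbE => /andP [cZ eyc].
have cp : c != p by apply/eqP => cp; move: cZ; rewrite cp PZ2.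
rewrite inE in_setD1 cp nbE eyc /=; rewrite leqNgt; apply/negP => good.
have cX : c \in X by apply: (oside' eyc yX).
move: cZ; rewrite inE cX /=; apply/negP; rewrite negbK.
have := good_prop p c; have := degX pX; move: pP; rewrite inE pX /=.
move: good q8; pnia.
Qed.

Lemma R0P y : y \notin X -> y \notin R0 -> exists p, e y p /\ p \in P.
Proof.
move=> yX; rewrite inE yX /= => /set0Pn [p]; rewrite in_setI nbE => /andP [h1 h2].
by exists p.
Qed.

Lemma iii a y0 y1 : a \in X -> y0 \in R0 -> y1 \notin R0 -> e a y0 -> e a y1 -> False.
Proof.
move=> aX y0R y1R ay0 ay1.
have y1X : y1 \notin X by apply: (oside ay1 aX).
have y0X : y0 \notin X by move: y0R; rewrite inE => /andP [].
have [p [y1p pP]] := R0P y1X y1R.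
have hii := ii_small y1X y1p pP.
have rb : #|nb a :&: R0| < K.
  apply: (kst_bound (q:=q) _ nob (esym' ay1)); first by move: q8; plia.
  - apply/subsetP => s; rewrite in_setI nbE in_setD1 nbE => /andP [asx sR]; rewrite asx andbT.
    by apply/eqP => sy; move: sR; rewrite sy (negbTE y1R).
  - by apply: kdeg.
  move=> s; rewrite in_setI nbE => /andP [asx sR].
  have h1 : #|nb y1 :&: Z 2| <= #|nb y1 :\: nb s|.
    apply: subset_leq_card; apply/subsetP => c; rewrite in_setI in_setD nbE nbE => /andP [y1c cZ].
    rewrite y1c andbT; apply/negP => sc; exact: (i_noZ sR sc cZ).
  have h2 := cardsID (Z 2) (nb y1).
  have := mindeg y1; rewrite degE => hm; have KD' := KD.
  move: h1 h2 hii hm KD' q8.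
  move: (#|nb y1 :&: Z 2|) (#|nb y1 :\: Z 2|) (#|nb y1 :\: nb s|) (#|nb y1|) (K) => a1 a2 m d k.
  move=> h1 h2 h3 h4 h5 h6.
  have h7 : d <= 8 * m by move: h1 h2 h3 h4 h5; plia.
  by apply: (leq_trans h7); rewrite leq_mul2r h6 orbT.
set Good := (nb y0 :\ a) :\: badset a y0.
have cGood : deg e y0 <= #|Good| + K.
  have := cardsD1 a (nb y0); rewrite nbE (esym' ay0) add1n -degE => ->.
  have := cardsID (badset a y0) (nb y0 :\ a).
  have : #|(nb y0 :\ a) :&: badset a y0| <= #|badset a y0| by apply: subset_leq_card; apply: subsetIr.
  have := bad_small ay0; rewrite /Good; plia.
have gterm : forall c, c \in Good -> (q - 1) * deg e a < q * #|nb c :&: nb a|.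
  move=> c; rewrite in_setD inE => /andP [cb cy].
  rewrite cy /= -ltnNge in cb.
  have := cardsID (nb c) (nb a); rewrite -degE setIC.
  move: cb q8; move: (#|nb c :&: nb a|) (#|nb a :\: nb c|) (deg e a) => x y d; pnia.
have GoodnoZ : forall c, c \in Good -> c \notin Z 2.
  move=> c; rewrite in_setD in_setD1 nbE => /andP [_ /andP [_ y0c]].
  by apply/negP => cZ; exact: (i_noZ y0R y0c cZ).
have wterm : forall w, w \in nb a ->
    #|nb w :&: Good| <= (w \in R0) * #|Good| + (K - 1).
  move=> w; rewrite nbE => aw.
  case wR : (w \in R0).
    by rewrite mul1n; apply: leq_trans (leq_addr _ _); apply: subset_leq_card; apply: subsetIr.
  rewrite mul0n add0n.
  have wX : w \notin X by apply: (oside aw aX).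
  have [p' [wp' p'P]] := R0P wX (negbT wR).
  have := ii_small wX wp' p'P.
  have : #|nb w :&: Good| <= #|nb w :\: Z 2|.
    apply: subset_leq_card; apply/subsetP => c; rewrite in_setI in_setD => /andP [wc cG].
    by rewrite wc andbT; apply: GoodnoZ.
  move=> h1 h2; rewrite subn1 -ltnS (ltn_predK K0); exact: leq_ltn_trans h1 h2.
have hl : #|Good| * ((q - 1) * deg e a) <= q * \sum_(c in Good) #|nb c :&: nb a|.
  rewrite big_distrr /=; apply: card_mul_le => c cG; apply: ltnW; exact: gterm.
rewrite dcount in hl.
have hr : \sum_(w in nb a) #|nb w :&: Good| <= #|nb a :&: R0| * #|Good| + deg e a * (K - 1).
  apply: (@leq_trans (\sum_(w in nb a) ((w \in R0) * #|Good| + (K - 1)))); first exact: leq_sum. rewrite big_split /=.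
  rewrite -big_distrl /= degE; apply: leq_add.
    rewrite leq_mul2r; apply/orP; right.
    rewrite -sum1_card big_mkcond /= [X in _ <= X]big_mkcond /=; apply: leq_sum => w _.
    by rewrite in_setI; case: (w \in R0); case: (w \in nb a).
  by rewrite -sum1_card big_distrl /=; apply: leq_sum => w _; rewrite mul1n.
have hda := mindeg a; have hdy0 := mindeg y0.
have KD' := KD; have qKD := qKD.
move: hl hr rb cGood hda hdy0 qKD KD' q8 K0.
move: (#|Good|) (deg e a) (deg e y0) (#|nb a :&: R0|) (K) (\sum_(w in nb a) #|nb w :&: Good|) => g d d0 r k S.
move=> hl hr rb cG hda hd0 qKD KD' q8' K0'.
have s1 : q * S <= q * k * g + q * k * d.
  have : q * S <= q * (r * g + d * (k - 1)) by rewrite leq_mul2l hr orbT.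
  move=> h; apply: (leq_trans h); rewrite mulnDr mulnA -mulnA.
  apply: leq_add; first by rewrite -mulnA leq_mul2l leq_mul2r (ltnW rb) !orbT.
  by rewrite [d * _]mulnC mulnA leq_mul2r leq_mul2l leq_subr !orbT.
have s2 : 4 * (q * k) <= d by apply: leq_trans hda.
have s3 : 4 * (q * k * g) <= d * g by rewrite mulnA leq_mul2r s2 orbT.
have s4 : g * ((q - 1) * d) <= q * k * g + q * k * d := leq_trans hl s1.
have s4' : 4 * (g * ((q - 1) * d)) <= 4 * (q * k * g) + 4 * (q * k * d).
  by rewrite -mulnDr leq_mul2l s4 orbT.
have dpos : 0 < d by apply: leq_trans s2; rewrite !muln_gt0 K0' (leq_trans _ q8').
have s5 : 4 * g * (q - 1) <= g + 4 * (q * k).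
  rewrite -(leq_pmul2r dpos).
  have -> : 4 * g * (q - 1) * d = 4 * (g * ((q - 1) * d)) by rewrite !mulnA.
  have -> : (g + 4 * (q * k)) * d = d * g + 4 * (q * k * d) by rewrite mulnDl [g * d]mulnC !mulnA.
  exact: (leq_trans s4' (leq_add s3 (leqnn _))).
have g31 : 31 * k <= g by move: cG hd0 KD'; plia.
clear -s5 g31 q8' K0'.
nia.
Qed.


Let Ain v := (v \in R0) || ((v \in X) && [exists w, e v w && (w \in R0)]).

Lemma Ain_edge a b : a \in X -> e a b -> Ain a = Ain b.
Proof.
move=> aX ab.
have bX : b \notin X by apply: (oside ab aX).
have aR : a \notin R0 by rewrite inE aX.
rewrite /Ain (negbTE aR) aX (negbTE bX) /= ?orbF.
case bR : (b \in R0).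
  by apply/existsP; exists b; rewrite ab bR.
apply/negbTE/negP => /existsP [w /andP [aw wR]].
exact: (iii aX wR (negbT bR) aw ab).
Qed.

Lemma claimH y : y \notin X -> exists p, e y p /\ p \in P.
Proof.
move=> yX; case yR : (y \in R0); last exact: (R0P yX (negbT yR)).
exfalso.
have cl : closed e Ain.
  move=> u v uv; case uX : (u \in X); first exact: Ain_edge.
  have vX : v \in X by apply: (oside' uv); rewrite uX.
  by symmetry; apply: Ain_edge => //; rewrite esym.
have := closed_connect cl (conn y xs).
change (Ain y = Ain xs -> False); rewrite /Ain yR /= xsX /=.
have xR : xs \notin R0 by rewrite inE xsX.
rewrite (negbTE xR) /= => hh; move: (Logic.eq_sym hh) => /existsP [w /andP [xw wR]].
move: wR; rewrite inE => /andP [_ /eqP wP].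
have : xs \in nb w :&: P by rewrite in_setI nbE esym xw xsP.
by rewrite wP inE.
Qed.

Lemma P_deg p : p \in P -> (q - 1) * Dl <= q * deg e p.
Proof.
rewrite inE => /andP [_ h]; apply: (leq_trans h); rewrite leq_mul2l; apply/orP; right.
by rewrite degE; apply: subset_leq_card; apply: subsetIl.
Qed.

Variable R : realType.
Variable eps : R.
Hypothesis heps : (2%:R <= q%:R * eps)%R.

Lemma real_to_nat (d : nat) : (d%:R <= (1 - eps) * Dl%:R)%R -> q * d + 2 * Dl <= q * Dl.
Proof.
move=> h; rewrite -(ler_nat R) natrD !natrM.
have h1 : (q%:R * d%:R <= q%:R * ((1 - eps) * Dl%:R) :> R)%R by rewrite ler_wpM2l // ler0n.
have h2 : (2%:R * Dl%:R <= q%:R * eps * Dl%:R :> R)%R by rewrite ler_wpM2r // ler0n.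
have -> : (q%:R * Dl%:R = q%:R * ((1 - eps) * Dl%:R) + q%:R * eps * Dl%:R :> R)%R by ring.
exact: lerD.
Qed.

Lemma lowbound y : y \notin X -> #|nb y :&: Uset e X eps| < K.
Proof.
move=> yX; have [p [yp pP]] := claimH yX.
have pX : p \in X by apply: (oside' yp yX).
have hp := P_deg pP.
have Dl0 : 0 < Dl by apply: leq_trans DlD; move: hD; plia.
have Ud : forall u, u \in Uset e X eps -> u \in X /\ q * deg e u + 2 * Dl <= q * Dl.
  move=> u; rewrite inE => /andP [uX h]; split => //; exact: real_to_nat.
apply: (kst_bound (q:=q) _ nob (esym' yp)); first by move: q8; plia.
- apply/subsetP => u; rewrite in_setI nbE => /andP [yu uU]; rewrite in_setD1 nbE yu andbT.
  apply/eqP => up; have [_ hu] := Ud u uU; move: hu hp Dl0; rewrite up.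
  move: (deg e p) => dp; pnia.
- by apply: kdeg.
move=> u; rewrite in_setI nbE => /andP [yu uU]; have [_ hu] := Ud u uU.
have hc := cardsID (nb u) (nb p).
have hi : #|nb p :&: nb u| <= deg e u by rewrite degE; apply: subset_leq_card; apply: subsetIr.
have hdp := degX pX.
move: hc hi hdp hu hp q8; rewrite -degE.
move: (#|nb p :&: nb u|) (#|nb p :\: nb u|) (deg e p) (deg e u) => a1 a2 dp du; pnia.
Qed.

End Struct.

Lemma two_match (U H : {set T}) M (z0 : T) : 0 < M ->
  (forall u, u \in U -> 2 * M <= #|nb u :&: H|) ->
  (forall y, y \in H -> #|nb y :&: U| <= M) ->
  exists fm fp : T -> T,
    (forall u, u \in U -> [/\ fm u \in H, fp u \in H, e u (fm u) & e u (fp u)]) /\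
    {in U &, injective fm} /\ {in U &, injective fp} /\
    (forall u u', u \in U -> u' \in U -> fm u != fp u').
Proof.
move=> M0 hU hH.
pose r (p : T * bool) y := e p.1 y && (y \in H).
pose L := [set p : T * bool | p.1 \in U].
have hc : hcond r L.
  move=> S SL.
  pose S1 := [set p.1 | p in S].
  have S1U : S1 \subset U.
    by apply/subsetP => u /imsetP [p pS ->]; move: (subsetP SL p pS); rewrite inE.
  have c1 : #|S| <= #|S1| * 2.
    have : S \subset setX S1 [set: bool].
      by apply/subsetP => p pS; rewrite inE in_setT andbT; apply/imsetP; exists p.
    by move/subset_leq_card; rewrite cardsX cardsT card_bool.
  have hd := dcount S1 (NS r S).
  have h1 : #|S1| * (2 * M) <= \sum_(u in S1) #|nb u :&: NS r S|.
    apply: card_mul_le => u uS1; apply: leq_trans (hU u (subsetP S1U u uS1)) _.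
    apply: subset_leq_card; apply/subsetP => y; rewrite !inE => /andP [uy yH].
    rewrite uy /=; move: uS1 => /imsetP [p pS up]; apply/existsP; exists p.
    by rewrite pS /r -up uy yH.
  have h2 : \sum_(y in NS r S) #|nb y :&: S1| <= #|NS r S| * M.
    apply: sum_le_card_mul => y; rewrite inE => /existsP [p /andP [pS /andP [_ yH]]].
    apply: leq_trans (hH y yH); apply: subset_leq_card.
    by apply/subsetP => u; rewrite !inE => /andP [-> /(subsetP S1U) ->].
  rewrite hd in h1; have h3 := leq_trans h1 h2.
  have h4 : #|S1| * 2 <= #|NS r S|.
    by move: h3; rewrite mulnA leq_pmul2r.
  exact: leq_trans c1 h4.
have [f [fr fi]] := hall z0 (leqnn #|L|) hc.
exists (fun u => f (u, false)), (fun u => f (u, true)); split; last split; last split.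
- move=> u uU; have h0 : (u, false) \in L by rewrite inE.
  have h1 : (u, true) \in L by rewrite inE.
  move: (fr _ h0) (fr _ h1); rewrite /r /= => /andP [a1 a2] /andP [a3 a4]; split => //.
- move=> u u' uU u'U h; have := fi (u, false) (u', false).
  by rewrite !inE uU u'U => /(_ isT isT h) [].
- move=> u u' uU u'U h; have := fi (u, true) (u', true).
  by rewrite !inE uU u'U => /(_ isT isT h) [].
- move=> u u' uU u'U; apply/eqP => h; have := fi (u, false) (u', true).
  by rewrite !inE uU u'U => /(_ isT isT h) [].
Qed.

End Graph.

Lemma lb_side (T : finType) (e : rel T) (X' : {set T}) t q D (R : realType) (eps : R) :
  symmetric e -> (forall u v, e u v -> (u \in X') != (v \in X')) ->
  0 < t -> 8 <= q -> ~ has_induced_biclaw e t t -> (forall u v, connect e u v) ->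
  (forall v, D <= deg e v) -> 4 * q * (t * (2*q) ^ t) + 4 * t * q + 8 <= D ->
  (2%:R <= q%:R * eps)%R ->
  forall y, y \notin X' -> #|nb e y :&: Uset e X' eps| <= t * (2*q) ^ t - 1.
Proof.
move=> es eb t0 q8 nob conn md hD heps y yX.
case: (posnP #|X'|) => [X0|Xpos].
  have -> : Uset e X' eps = set0.
    apply/setP => v; rewrite !inE; apply/negbTE; apply/negP => /andP [vX _].
    by move: X0 => /eqP; rewrite cards_eq0 => /eqP X0; move: vX; rewrite X0 inE.
  by rewrite setI0 cards0.
have [xs xsX xsd] := eq_bigmax_cond (fun v => deg e v) Xpos.
have := lowbound es eb t0 q8 nob conn md hD xsX (esym xsd) heps yX.
by move=> h; rewrite -ltnS; apply: leq_trans h _; move: t0 q8; clear; nia.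
Qed.

Local Open Scope ring_scope.

Definition qf (R : realType) (eps : R) : nat := ((Num.trunc (2 / eps)).+1 + 8)%N.
Definition Kf (t q : nat) : nat := (t * (2*q) ^ t)%N.
Definition Bigf (t q : nat) : nat := (4 * q * Kf t q + 4 * t * q + 8)%N.

Lemma part_one (T : finType) (e : rel T) (X : {set T}) t q D (R : realType) (eps : R) :
  symmetric e -> (forall u v, e u v -> (u \in X) != (v \in X)) ->
  (0 < t)%N -> (8 <= q)%N -> ~ has_induced_biclaw e t t -> (forall u v, connect e u v) ->
  (forall v, D <= deg e v)%N -> (3 * Bigf t q <= D)%N ->
  (2%:R <= q%:R * eps) ->
  exists fm fp : T -> T,
       (forall u, u \in Uset e X eps ->
          [/\ fm u \in (~: X) :\: Uset e (~: X) eps,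
              fp u \in (~: X) :\: Uset e (~: X) eps,
              e u (fm u) & e u (fp u)]) /\
       {in Uset e X eps &, injective fm} /\
       {in Uset e X eps &, injective fp} /\
       (forall u u', u \in Uset e X eps -> u' \in Uset e X eps -> fm u != fp u').
Proof.
move=> es eb t0 q8 nob conn md hD heps.
have hD' : (4 * q * (t * (2*q) ^ t) + 4 * t * q + 8 <= D)%N.
  by apply: leq_trans hD; rewrite /Bigf /Kf; lia.
have ebc : forall u v, e u v -> (u \in ~: X) != (v \in ~: X).
  by move=> u v /eb; rewrite !inE; case: (u \in X); case: (v \in X).
have lbX := lb_side es eb t0 q8 nob conn md hD' heps.
have lbY := lb_side es ebc t0 q8 nob conn md hD' heps.
set K := (t * (2*q) ^ t)%N in lbX lbY hD'.
have K16 : (16 <= K)%N.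
  rewrite /K; apply: (@leq_trans ((2*q) ^ 1)); first by rewrite expn1; lia.
  apply: (@leq_trans ((2*q) ^ t)); first by rewrite leq_pexp2l //; lia.
  by rewrite leq_pmull.
case: (set_0Vmem (Uset e X eps)) => [U0|[z0 z0U]].
  by exists id, id; rewrite U0; split; [move=> u; rewrite inE | split; [|split]] => // u u'; rewrite inE.
apply: (@two_match _ e es _ _ (K - 1) z0).
- by rewrite subn_gt0; apply: leq_trans K16.
- move=> u uU.
  have uX : u \in X by move: uU; rewrite inE => /andP [].
  have h1 : (#|nb e u :&: Uset e (~: X) eps| <= K - 1)%N by apply: lbY; rewrite inE uX.
  have h2 := cardsID (Uset e (~: X) eps) (nb e u).
  have h3 : (#|nb e u :\: Uset e (~: X) eps| <= #|nb e u :&: ((~: X) :\: Uset e (~: X) eps)|)%N.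
    apply: subset_leq_card; apply/subsetP => y; rewrite in_setD => /andP [yU uy].
    rewrite in_setI uy in_setD yU /= in_setC; move: uy; rewrite nbE => uy.
    by have := eb u y uy; rewrite uX; case: (y \in X).
  have h4 := md u; rewrite /deg -/(nb e u) in h4.
  by move: h1 h2 h3 h4 hD' K16 q8; clear; nia.
- move=> y; rewrite !inE => /andP [_ yX].
  by apply: lbX; rewrite yX.
Qed.

Unset Implicit Arguments.

Theorem mainTheorem15 (R : realType) :
  exists C : nat -> R -> R,
  forall (t : nat) (eps : R), (0 < t)%N -> 0 < eps < 1 ->
  forall (T : finType) (e : rel T) (X : {set T}) (n : nat),
    symmetric e ->
    (forall u v, e u v -> (u \in X) != (v \in X)) ->
    #|X| = n -> #|~: X| = n ->
    (forall u v, connect e u v) ->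
    (forall v, 3 * C t eps <= (deg e v)%:R) ->
    ~ has_induced_biclaw e t t ->
    (exists fm fp : T -> T,
       (forall u, u \in Uset e X eps ->
          [/\ fm u \in (~: X) :\: Uset e (~: X) eps,
              fp u \in (~: X) :\: Uset e (~: X) eps,
              e u (fm u) & e u (fp u)]) /\
       {in Uset e X eps &, injective fm} /\
       {in Uset e X eps &, injective fp} /\
       (forall u u', u \in Uset e X eps -> u' \in Uset e X eps -> fm u != fp u'))
    /\
    (exists fm fp : T -> T,
       (forall v, v \in Uset e (~: X) eps ->
          [/\ fm v \in X :\: Uset e X eps,
              fp v \in X :\: Uset e X eps,
              e v (fm v) & e v (fp v)]) /\
       {in Uset e (~: X) eps &, injective fm} /\
       {in Uset e (~: X) eps &, injective fp} /\
       (forall v v', v \in Uset e (~: X) eps -> v' \in Uset e (~: X) eps -> fm v != fp v')).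
Proof.
exists (fun t eps => (Bigf t (qf eps))%:R).
move=> t eps t0 /andP [eps0 eps1] T e X n es eb cX cY conn hdeg nob.
set q := qf eps.
have q8 : (8 <= q)%N by rewrite /q /qf; lia.
have heps : 2%:R <= q%:R * eps.
  have h := truncnS_gt (2 / eps).
  have h2 : 2 / eps <= q%:R.
    apply: ltW; apply: (lt_le_trans h); rewrite ler_nat /q /qf; exact: leq_addr.
  have -> : (2%:R : R) = 2 / eps * eps by rewrite divfK // gt_eqF.
  by rewrite ler_wpM2r // ltW.
have md : forall v, (3 * Bigf t q <= deg e v)%N.
  by move=> v; have := hdeg v; rewrite -natrM ler_nat.
have ebc : forall u v, e u v -> (u \in ~: X) != (v \in ~: X).
  by move=> u v /eb; rewrite !inE; case: (u \in X); case: (v \in X).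
split.
  exact: (part_one es eb t0 q8 nob conn md (leqnn _) heps).
have := part_one es ebc t0 q8 nob conn md (leqnn _) heps.
by rewrite setCK.
Qed.
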